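(* Let $c$ and $k$ be non-negative integers, let $p$ be a prime, let $G$ be a finitely generated pro-$p$ group of nilpotency class $c$, and let $K=G^{p^k}$. (a) Suppose $p$ is odd and $k-1\geq \log_p(c+1)$. Then $[N,K]\leq N^p$ for every normal subgroup $N$ of $G$; in particular $K$ is powerful. (b) Suppose $p=2$ and $k-2\geq \log_2(c+1)$. Then $[N,K]\leq N^4$ for every normal subgroup $N$ of $G$; in particular $K$ is powerful.
   Context: In pro-$p$ groups, subgroups are closed and generation is topological. For a (pro-)$p$ group $H$, $H^{p^j}$ denotes the (closed) subgroup generated by all $p^j$-th powers of elements of $H$, and $[H,L]$ is the (closed) subgroup generated by commutators $[x,y]=x^{-1}y^{-1}xy$, $x\in H$, $y\in L$. A (pro-)$p$ group $H$ is powerful if $[H,H]\leq H^p$ for $p$ odd, and $[H,H]\leq H^4$ for $p=2$. *)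

(* Defs.v *)
From HB Require Import structures.
From mathcomp Require Import all_boot all_order all_algebra.
From mathcomp Require Import all_classical all_reals topology.
Set Implicit Arguments. Unset Strict Implicit. Unset Printing Implicit Defensive.
Local Open Scope classical_set_scope.

Record group_law (T : Type) := GroupLaw {
  gmul : T -> T -> T;
  ginv : T -> T;
  gone : T;
  gmulA : forall x y z, gmul x (gmul y z) = gmul (gmul x y) z;
  gmul1 : forall x, gmul gone x = x;
  gmulV : forall x, gmul (ginv x) x = gone
}.

Section ProP.
Variables (T : topologicalType) (G : group_law T).
Local Notation "x * y" := (gmul G x y).
Local Notation "x ^-1" := (ginv G x).
Local Notation "1" := (gone G).

Fixpoint gexp (x : T) (n : nat) : T := if n is n'.+1 then x * gexp x n' else 1.
Definition gcomm (x y : T) : T := x^-1 * y^-1 * x * y.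

Definition is_subgroup (H : set T) :=
  H 1 /\ (forall x y, H x -> H y -> H (x * y)) /\ (forall x, H x -> H (x^-1)).
Definition is_normal (N : set T) :=
  is_subgroup N /\ (forall x g, N x -> N (g^-1 * x * g)).

Definition topological_group :=
  continuous (fun xy : T * T => xy.1 * xy.2) /\ continuous (fun x : T => x^-1).

(* N has finite index p^e in G (N normal) : a transversal of size p^e *)
Definition index_pow (p : nat) (N : set T) :=
  exists e (f : 'I_(p ^ e) -> T),
    (forall x, exists i, N (x * (f i)^-1)) /\
    (forall i j, N (f i * (f j)^-1) -> i = j).

Definition pro_p_group (p : nat) :=
  topological_group /\ hausdorff_space T /\ compact [set: T] /\
  totally_disconnected [set: T] /\
  (forall N, is_normal N -> open N -> index_pow p N).

Definition gen_closed (S : set T) : set T :=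
  [set x | forall H, is_subgroup H -> closed H -> S `<=` H -> H x].

Definition gpow_sub (H : set T) (n : nat) : set T :=
  gen_closed [set gexp x n | x in H].

Definition gcomm_sub (H L : set T) : set T :=
  gen_closed [set gcomm x y | x in H & y in L].

Definition fin_gen :=
  exists (n : nat) (f : 'I_n -> T), gen_closed (range f) = [set: T].

(* lower central series: lcs 0 = G, lcs (i+1) = [lcs i, G]; i.e. gamma_{i+1} = lcs i *)
Fixpoint lcs (i : nat) : set T :=
  if i is i'.+1 then gcomm_sub (lcs i') [set: T] else [set: T].

Definition nil_class (c : nat) :=
  lcs c = [set 1] /\ (forall d, lcs d = [set 1] -> (c <= d)%N).

Definition powerful (p : nat) (H : set T) :=
  if p == 2 then gcomm_sub H H `<=` gpow_sub H 4
  else gcomm_sub H H `<=` gpow_sub H p.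

End ProP.

(* Main.v *)
Require Import Defs.
From HB Require Import structures.
From mathcomp Require Import all_boot all_order all_algebra.
From mathcomp Require Import all_classical all_reals topology.
From mathcomp Require Import zify.
From Stdlib Require Import Lia.
Local Open Scope classical_set_scope.
Set Implicit Arguments. Unset Strict Implicit. Unset Printing Implicit Defensive.

(* Proof outline.
   1. Abstract group theory (module GCore): commutator calculus, the three
      subgroup lemma for the discrete lower central series, and the
      Lazard-Leibman theorem that polynomial sequences (w.r.t. a filtration
      with [F_i,F_j] <= F_(i+j)) are closed under products, inverses,
      conjugation and commutators.  A Taylor expansion then gives
      [y, g^n] = prod_(j<c) w_j^C(n,j) with w_j in N (Hall-Petresco).
   2. Divisibility of binomial coefficients C(p^k, j).
   3. Topology: closed generated subgroups, continuity of commutator maps. *)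

Module GCore.

Section Core.
Variable T : Type.
Variables (mul : T -> T -> T) (inv : T -> T) (one : T).
Hypothesis mulA : forall x y z, mul x (mul y z) = mul (mul x y) z.
Hypothesis mul1 : forall x, mul one x = x.
Hypothesis mulV : forall x, mul (inv x) x = one.

Local Infix "⋅" := mul (at level 40, left associativity).

Lemma mulVr x : x ⋅ inv x = one.
Proof.
have h : inv (inv x) ⋅ inv x = one by rewrite mulV.
rewrite -[x ⋅ _]mul1 -h -!mulA; congr (_ ⋅ _).
by rewrite (mulA (inv x)) mulV mul1.
Qed.
Lemma mul1r x : x ⋅ one = x.
Proof. by rewrite -(mulV x) mulA mulVr mul1. Qed.
Lemma mulKl x y : inv x ⋅ (x ⋅ y) = y.
Proof. by rewrite mulA mulV mul1. Qed.
Lemma mulKr x y : x ⋅ (inv x ⋅ y) = y.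
Proof. by rewrite mulA mulVr mul1. Qed.
Lemma mulVK w x : w ⋅ inv x ⋅ x = w.
Proof. by rewrite -mulA mulV mul1r. Qed.
Lemma mulKV w x : w ⋅ x ⋅ inv x = w.
Proof. by rewrite -mulA mulVr mul1r. Qed.
Lemma inv_uniq x y : x ⋅ y = one -> inv x = y.
Proof. by move=> h; rewrite -[inv x]mul1r -h mulKl. Qed.
Lemma invK x : inv (inv x) = x.
Proof. by apply: inv_uniq; rewrite mulV. Qed.
Lemma invM x y : inv (x ⋅ y) = inv y ⋅ inv x.
Proof. by apply: inv_uniq; rewrite -mulA (mulA y) mulVr mul1 mulVr. Qed.
Lemma inv1 : inv one = one.
Proof. by apply: inv_uniq; rewrite mul1. Qed.

Ltac gsimpl := repeat progress rewrite ?invM ?invK ?inv1 ?mulA ?mulV ?mulVr ?mul1 ?mul1r ?mulVK ?mulKV.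

Definition cj x y := inv y ⋅ x ⋅ y.
Definition cm x y := inv x ⋅ inv y ⋅ x ⋅ y.

Lemma hall_witt x y z :
  cj (cm (cm x (inv y)) z) y ⋅ cj (cm (cm y (inv z)) x) z ⋅ cj (cm (cm z (inv x)) y) x = one.
Proof. rewrite /cj /cm; gsimpl. done. Qed.


Lemma cmE x y : cm x y = inv x ⋅ cj x y.
Proof. by rewrite /cm /cj; gsimpl. Qed.
Lemma cmE' x y : cm x y = cj (inv y) x ⋅ y.
Proof. by rewrite /cm /cj; gsimpl. Qed.
Lemma cm_inv x y : inv (cm x y) = cm y x.
Proof. by rewrite /cm; gsimpl. Qed.
Lemma cm_mulr x y1 y2 : cm x (y1 ⋅ y2) = cm x y2 ⋅ cj (cm x y1) y2.
Proof. by rewrite /cm /cj; gsimpl. Qed.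
Lemma cm_invr x y : cm x (inv y) = cj (inv (cm x y)) (inv y).
Proof. by rewrite /cm /cj; gsimpl. Qed.
Lemma cm_1r x : cm x one = one.
Proof. by rewrite /cm; gsimpl. Qed.
Lemma cjM x y z : cj x (y ⋅ z) = cj (cj x y) z.
Proof. by rewrite /cj; gsimpl. Qed.
Lemma cj_mul x y z : cj (x ⋅ y) z = cj x z ⋅ cj y z.
Proof. by rewrite /cj; gsimpl. Qed.
Lemma cj_inv x z : cj (inv x) z = inv (cj x z).
Proof. by rewrite /cj; gsimpl. Qed.
Lemma cjK x z : cj (cj x z) (inv z) = x.
Proof. by rewrite /cj; gsimpl. Qed.
Lemma cjKV x z : cj (cj x (inv z)) z = x.
Proof. by rewrite /cj; gsimpl. Qed.

Definition sg (H : T -> Prop) :=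
  H one /\ (forall x y, H x -> H y -> H (x ⋅ y)) /\ (forall x, H x -> H (inv x)).
Definition nrm (H : T -> Prop) := sg H /\ (forall x g, H x -> H (inv g ⋅ x ⋅ g)).

Section SG.
Variable H : T -> Prop.
Hypothesis hH : sg H.
Lemma sg1 : H one. Proof. by case: hH. Qed.
Lemma sgM x y : H x -> H y -> H (x ⋅ y). Proof. by case: hH => _ []; auto. Qed.
Lemma sgV x : H x -> H (inv x). Proof. by case: hH => _ []; auto. Qed.
Lemma sgVr x : H (inv x) -> H x. Proof. by move/sgV; rewrite invK. Qed.
End SG.

Section NRM.
Variable H : T -> Prop.
Hypothesis hH : nrm H.
Lemma nrm_sg : sg H. Proof. by case: hH. Qed.
Lemma nrmJ x g : H x -> H (cj x g). Proof. by case: hH => _; apply. Qed.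
Lemma nrm_cml x y : H x -> H (cm x y).
Proof. by move=> hx; rewrite cmE; apply: sgM nrm_sg _ _ (sgV nrm_sg hx) (nrmJ _ hx). Qed.
Lemma nrm_cmr x y : H y -> H (cm x y).
Proof. by move=> hy; rewrite cmE'; apply: sgM nrm_sg _ _ (nrmJ _ (sgV nrm_sg hy)) hy. Qed.
End NRM.

Lemma sgI (A B : T -> Prop) : sg A -> sg B -> sg (fun x => A x /\ B x).
Proof.
move=> hA hB; split; first by split; apply: sg1.
split=> [x y [? ?] [? ?]|x [? ?]]; split; by [apply: sgM | apply: sgV].
Qed.
Lemma nrmI (A B : T -> Prop) : nrm A -> nrm B -> nrm (fun x => A x /\ B x).
Proof.
move=> hA hB; split; first by apply: sgI; apply: nrm_sg.
by move=> x g [? ?]; split; [apply: (nrmJ hA) | apply: (nrmJ hB)].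
Qed.

Definition gen (S : T -> Prop) : T -> Prop :=
  fun x => forall H, sg H -> (forall y, S y -> H y) -> H x.
Lemma gen_sg S : sg (gen S).
Proof.
split; first by move=> H hH _; apply: sg1.
split=> [x y hx hy|x hx] H hH hS; first by apply: sgM (hx _ hH hS) (hy _ hH hS).
by apply: sgV (hx _ hH hS).
Qed.
Lemma gen_sub S x : S x -> gen S x.
Proof. by move=> hx H _; apply. Qed.
Lemma gen_min S H : sg H -> (forall y, S y -> H y) -> forall x, gen S x -> H x.
Proof. by move=> hH hS x; apply. Qed.
Lemma gen_nrm S : (forall x g, S x -> S (cj x g)) -> nrm (gen S).
Proof.
move=> hS; split; first exact: gen_sg.
move=> x g hx; pose H' := fun y => gen S (cj y g).
have hH' : sg H'.
  split; first by rewrite /H' /cj mul1r mulV; apply: sg1 (gen_sg S).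
  split=> [a b ha hb|a ha]; rewrite /H'; first by rewrite cj_mul; apply: sgM (gen_sg S) _ _ ha hb.
  by rewrite cj_inv; apply: sgV (gen_sg S) _ ha.
exact: (gen_min hH' (fun y hy => gen_sub (hS _ _ hy)) hx).
Qed.

Lemma cent_sg (X A : T -> Prop) : nrm X -> sg (fun y => forall x, A x -> X (cm x y)).
Proof.
move=> hX; split; first by move=> x _; rewrite cm_1r; apply: sg1 (nrm_sg hX).
split=> [a b ha hb x hx|a ha x hx].
  by rewrite cm_mulr; apply: sgM (nrm_sg hX) _ _ (hb _ hx) (nrmJ hX _ (ha _ hx)).
by rewrite cm_invr; apply: (nrmJ hX); apply: sgV (nrm_sg hX) _ (ha _ hx).
Qed.

Fixpoint gam (l : nat) : T -> Prop :=
  if l is l'.+1 then gen (fun z => exists x t, gam l' x /\ z = cm x t) else fun _ => True.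

Lemma gam_nrm l : nrm (gam l).
Proof.
elim: l => [|l IH] /=.
  by split=> //; split.
apply: gen_nrm => z g [x [t [hx ->]]]; exists (cj x g), (cj t g); split.
  by apply: nrmJ.
by rewrite /cj /cm; gsimpl.
Qed.
Lemma gam_cm l x t : gam l x -> gam l.+1 (cm x t).
Proof. by move=> hx; apply: gen_sub; exists x, t. Qed.
Lemma gam_S l x : gam l.+1 x -> gam l x.
Proof.
apply: gen_min; first exact: nrm_sg (gam_nrm l).
by move=> _ [y [t [hy ->]]]; apply: nrm_cml (gam_nrm l) _ _ hy.
Qed.
Lemma gam_le l m x : l <= m -> gam m x -> gam l x.
Proof.
move=> /subnK <-; elim: (m - l) => [|d IH] //= h.
by apply: IH; apply: gam_S; rewrite -addSn.
Qed.

Lemma three_sub b : forall a x y, gam a x -> gam b y -> gam (a + b).+1 (cm x y).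
Proof.
elim: b => [|b IH] a x y hx hy.
  by rewrite addn0; apply: gam_cm.
have hX := gam_nrm (a + b.+1).+1.
pose P := fun y => forall x, gam a x -> gam (a + b.+1).+1 (cm x y).
have hP : sg P := cent_sg (gam a) hX.
move: x hx; apply: (gen_min hP) hy => _ [u [t [hu ->]]] x hx.
have hw := hall_witt u (inv t) x.
rewrite invK in hw.
have hB : gam (a + b.+1).+1 (cj (cm (cm (inv t) (inv x)) u) x).
  apply: (nrmJ hX); rewrite -addSnnS.
  apply: (IH _ _ _ _ hu); rewrite -cm_inv; apply: sgV (nrm_sg (gam_nrm _)) _ _.
  by apply: gam_cm; apply: sgV (nrm_sg (gam_nrm _)) _ hx.
have hC : gam (a + b.+1).+1 (cj (cm (cm x (inv u)) (inv t)) u).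
  apply: (nrmJ hX); rewrite addnS; apply: gam_cm; apply: (IH _ _ _ hx).
  by apply: sgV (nrm_sg (gam_nrm _)) _ hu.
have hA : gam (a + b.+1).+1 (cj (cm (cm u t) x) (inv t)).
  have -> : cj (cm (cm u t) x) (inv t) =
     inv (cj (cm (cm (inv t) (inv x)) u) x ⋅ cj (cm (cm x (inv u)) (inv t)) u).
    by rewrite -(inv_uniq (etrans (mulA _ _ _) hw)) invK.
  by apply: sgV (nrm_sg hX) _ _; apply: sgM (nrm_sg hX) _ _ hB hC.
have := nrmJ hX t hA; rewrite cjKV => h.
by rewrite -cm_inv; apply: sgV (nrm_sg hX) _ h.
Qed.


Fixpoint pw (x : T) (n : nat) : T := if n is n'.+1 then x ⋅ pw x n' else one.

Lemma pwD x m n : pw x (m + n) = pw x m ⋅ pw x n.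
Proof. by elim: m => [|m IH] /=; rewrite ?mul1 // IH mulA. Qed.
Lemma pwM x m n : pw x (m * n) = pw (pw x m) n.
Proof. by elim: n => [|n IH]; rewrite ?muln0 //= mulnS pwD IH. Qed.
Lemma pw_inv x n : inv (pw x n) = pw (inv x) n.
Proof.
elim: n => [|n IH] /=; first by rewrite inv1.
rewrite invM IH; have -> : pw (inv x) n ⋅ inv x = pw (inv x) (n + 1) by rewrite pwD /= mul1r.
by rewrite addn1.
Qed.
Lemma cj1 z : cj one z = one.
Proof. by rewrite /cj; gsimpl. Qed.
Lemma cj_pw x z n : cj (pw x n) z = pw (cj x z) n.
Proof. by elim: n => [|n IH] /=; rewrite ?cj1 // cj_mul IH. Qed.
Lemma pw_sg (H : T -> Prop) x n : sg H -> H x -> H (pw x n).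
Proof. by move=> hH hx; elim: n => [|n IH] /=; [apply: sg1 | apply: sgM]. Qed.

Section Poly.
Variable F : nat -> T -> Prop.
Hypothesis hFn : forall t, nrm (F t).
Hypothesis hFS : forall t x, F t.+1 x -> F t x.
Hypothesis hFc : forall t s x y, F t x -> F s y -> F (t + s) (cm x y).

Lemma F_le t t' x : t <= t' -> F t' x -> F t x.
Proof.
move=> /subnK <-; elim: (t' - t) => [|d IH] //= h.
by apply: IH; apply: hFS; rewrite -addSn.
Qed.

Definition nab (f : nat -> T) : nat -> T := fun n => inv (f n) ⋅ f n.+1.

Fixpoint polyR (r t : nat) (f : nat -> T) : Prop :=
  (forall n, F t (f n)) /\ (if r is r'.+1 then polyR r' t.+1 (nab f) else True).

Lemma polyR_val r t f n : polyR r t f -> F t (f n).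
Proof. by case: r => [|r] [h _]; apply: h. Qed.

Lemma polyR_ext r : forall t f g, (forall n, f n = g n) -> polyR r t f -> polyR r t g.
Proof.
elim: r => [|r IH] t f g e [hv hd]; (split; first by move=> n; rewrite -e) => //.
by apply: IH hd => n; rewrite /nab !e.
Qed.

Lemma polyR_le r : forall t t' f, t <= t' -> polyR r t' f -> polyR r t f.
Proof.
elim: r => [|r IH] t t' f le [hv hd]; (split; first by move=> n; apply: F_le le _) => //.
by apply: IH hd.
Qed.

Lemma polyR_Sr r : forall t f, polyR r.+1 t f -> polyR r t f.
Proof.
elim: r => [|r IH] t f [hv hd]; split=> //.
by apply: IH; case: hd.
Qed.

Lemma polyR_sh r : forall t f, polyR r t f -> polyR r t (fun n => f n.+1).
Proof.
elim: r => [|r IH] t f [hv hd]; split=> //.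
by apply: IH hd.
Qed.

Lemma polyR0 r t f : polyR r t f -> polyR r 0 f.
Proof. by apply: polyR_le. Qed.

Lemma poly_closed r :
  (forall t f, polyR r t f -> polyR r t (fun n => inv (f n))) /\
  (forall t f g, polyR r t f -> polyR r t g -> polyR r t (fun n => f n ⋅ g n)) /\
  (forall t x g, polyR r t x -> polyR r 0 g -> polyR r t (fun n => cj (x n) (g n))) /\
  (forall t s y a, polyR r t y -> polyR r s a -> polyR r (t + s) (fun n => cm (y n) (a n))).
Proof.
elim: r => [|r [Iv [Pr [Cj Cm]]]].
  split; [|split; [|split]].
  - by move=> t f [hv _]; split=> // n; apply: sgV (nrm_sg (hFn t)) _ (hv n).
  - by move=> t f g [hf _] [hg _]; split=> // n; apply: sgM (nrm_sg (hFn t)) _ _ (hf n) (hg n).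
  - by move=> t x g [hx _] _; split=> // n; apply: nrmJ (hFn t) _ _ (hx n).
  - by move=> t s y a [hy _] [ha _]; split=> // n; apply: hFc.
split; [|split; [|split]].
- move=> t f hf; have hf' := polyR_Sr hf; split; first by move=> n; exact: (polyR_val n (Iv _ _ hf')).
  case: hf => _ hd.
  apply: (polyR_ext (f := fun n => cj (inv (nab f n)) (inv (f n)))).
    by move=> n; rewrite /nab /cj; gsimpl.
  by apply: (Cj); [apply: (Iv) | apply: polyR0 (Iv _ _ hf')].
- move=> t f g hf hg; have hf' := polyR_Sr hf; have hg' := polyR_Sr hg.
  split; first by move=> n; exact: (polyR_val n (Pr _ _ _ hf' hg')).
  case: hf => _ hdf; case: hg => _ hdg.
  apply: (polyR_ext (f := fun n => cj (nab f n) (g n) ⋅ nab g n)).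
    by move=> n; rewrite /nab /cj; gsimpl.
  by apply: (Pr) => //; apply: (Cj) => //; apply: polyR0 hg'.
- move=> t x g hx hg; have hx' := polyR_Sr hx; have hg' := polyR_Sr hg.
  have hh := Cj _ _ _ hx' hg'.
  split; first by move=> n; exact: (polyR_val n hh).
  case: hx => _ hdx; case: hg => _ hdg.
  apply: (polyR_ext (f := fun n => cm (cj (x n) (g n)) (nab g n) ⋅
                                   cj (cj (nab x n) (g n)) (nab g n))).
    by move=> n; rewrite /nab /cj /cm; gsimpl.
  apply: (Pr); first by rewrite -addn1; apply: (Cm).
  by apply: (Cj); [apply: (Cj) | apply: polyR0 hdg].
- move=> t s y a hy ha; have hy' := polyR_Sr hy; have ha' := polyR_Sr ha.
  have hz := Cm _ _ _ _ hy' ha'.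
  split; first by move=> n; exact: (polyR_val n hz).
  case: hy => _ hdy; case: ha => _ hda.
  apply: (polyR_ext (f := fun n => cj (cj (cm (y n) (nab a n)) (nab y n)) (cm (y n) (a n)) ⋅
              cm (cm (y n) (a n)) (nab a n ⋅ nab y n) ⋅ cm (nab y n) (a n.+1))).
    by move=> n; rewrite /nab /cj /cm; gsimpl.
  apply: (Pr); first apply: (Pr).
  + apply: (Cj); last by apply: polyR0 hz.
    by apply: (Cj); [rewrite -addnS; apply: (Cm) | apply: polyR0 hdy].
  + rewrite -addn1; apply: (Cm) => //.
    by apply: (Pr); apply: (@polyR_le _ _ _ _ _ hda) || apply: (@polyR_le _ _ _ _ _ hdy).
  + by rewrite -addSn; apply: (Cm) => //; apply: polyR_sh.
Qed.


Definition nabn i f := iter i nab f.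
Definition polyA f := forall r, polyR r 0 f.

Lemma polyR_nabn i : forall r t f n, i <= r -> polyR r t f -> F (t + i) (nabn i f n).
Proof.
elim: i => [|i IH] r t f n le hf; first by rewrite addn0; apply: polyR_val hf.
case: r le hf => [|r] // le [_ hd].
by rewrite /nabn iterSr addnS -addSn; apply: IH hd.
Qed.

Lemma polyA_nabn f i n : polyA f -> F i (nabn i f n).
Proof. by move=> hf; apply: (polyR_nabn (r := i)) (hf i). Qed.

Lemma polyR_one r : forall t, polyR r t (fun _ => one).
Proof.
elim: r => [|r IH] t; split=> //; try (by move=> n; apply: sg1 (nrm_sg (hFn t))).
by apply: polyR_ext (IH t.+1) => n; rewrite /nab inv1 mul1.
Qed.

Lemma ps_poly r : forall m i v, F (i + m) v -> polyR r i (fun n => pw v 'C(n, m)).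
Proof.
elim: r => [|r IH] m i v hv.
  by split=> // n; apply: (pw_sg _ (nrm_sg (hFn i))); apply: F_le (leq_addr m i) hv.
split; first by move=> n; apply: (pw_sg _ (nrm_sg (hFn i))); apply: F_le (leq_addr m i) hv.
case: m hv => [|m] hv.
  by apply: polyR_ext (polyR_one r i.+1) => n; rewrite /nab !bin0 /= mul1r mulV.
apply: polyR_ext (IH m i.+1 v _) => [n|]; last by rewrite addSnnS.
by rewrite /nab binS pwD mulA mulV mul1.
Qed.

Lemma nabn_last i : forall k g h c, (forall n, k <= n < k + i -> g n = h n) ->
  g (k + i) = h (k + i) ⋅ c -> nabn i g k = nabn i h k ⋅ c.
Proof.
elim: i => [|i IH] k g h c e ec; first by move: ec; rewrite addn0.
rewrite /nabn !iterSr; apply: IH.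
  by move=> n /andP [h1 h2]; rewrite /nab !e //; apply/andP; split; lia.
rewrite /nab -addnS ec e; first by rewrite mulA.
apply/andP; split; lia.
Qed.

Lemma nabn_local i k g h : (forall n, k <= n <= k + i -> g n = h n) -> nabn i g k = nabn i h k.
Proof.
move=> e; rewrite -[nabn i h k]mul1r; apply: nabn_last.
  by move=> n /andP [h1 h2]; apply: e; rewrite h1 ltnW.
by rewrite mul1r e // leq_addr leqnn.
Qed.

Lemma newton D f : (forall x, F D x -> x = one) -> polyA f ->
  (forall i, i < D -> nabn i f 0 = one) -> forall n, f n = one.
Proof.
move=> hD hf h0.
have key : forall j, j <= D -> forall n, nabn (D - j) f n = one.
  elim=> [|j IH] le n; first by rewrite subn0; apply: hD; apply: polyA_nabn.
  have e : D - j = (D - j.+1).+1 by rewrite subnS prednK // subn_gt0.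
  have hs : forall m, nabn (D - j.+1) f m.+1 = nabn (D - j.+1) f m.
    move=> m; have := IH (ltnW le) m; rewrite e /nabn iterS /nab => h.
    by rewrite -[LHS]mul1 -(mulVr (iter (D - j.+1) nab f m)) -mulA h mul1r.
  elim: n => [|n IHn]; last by rewrite hs.
  by apply: (h0); lia.
by move=> n; have := key D (leqnn D) n; rewrite subnn.
Qed.


Fixpoint prodw (w : nat -> T) (m n : nat) : T :=
  if m is m'.+1 then pw (w m) 'C(n, m) ⋅ prodw w m' n else one.

Lemma prodw_ext w w' m n : (forall i, i <= m -> w i = w' i) -> prodw w m n = prodw w' m n.
Proof.
elim: m => [|m IH] e //=; rewrite e // IH // => i le; apply: e; exact: leqW.
Qed.

Lemma peel s : polyA s -> s 0 = one -> forall m, exists f w, polyA f /\ f 0 = one /\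
  (forall i, 0 < i <= m -> nabn i f 0 = one) /\ (forall j, F j (w j)) /\
  (forall n, s n = f n ⋅ prodw w m n).
Proof.
move=> hs s0; elim=> [|m [f [w [hf [f0 [hi [hw e]]]]]]].
  exists s, (fun _ => one); split=> //; split=> //; split; first by move=> i; case: i.
  by split=> [j|n]; [apply: sg1 (nrm_sg (hFn j)) | rewrite mul1r].
pose v := nabn m.+1 f 0.
have hv : F m.+1 v by apply: polyA_nabn.
pose f' := fun n => f n ⋅ pw (inv v) 'C(n, m.+1).
pose w' := fun i => if i == m.+1 then v else w i.
have ef : forall n, n <= m -> f' n = f n.
  by move=> n le; rewrite /f' bin_small ?ltnS //= mul1r.
exists f', w'; split.
  move=> r; case: (poly_closed r) => _ [Pr _]; apply: (Pr _ _ _ (hf r)).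
  by apply: ps_poly; rewrite add0n; apply: sgV (nrm_sg (hFn _)) _ hv.
split; first by rewrite ef.
split.
  move=> i /andP [i0]; rewrite leq_eqVlt => /orP [/eqP ->|lti].
    rewrite -[nabn _ f' 0]/(nabn m.+1 f' 0) (nabn_last (h := f) (c := inv v)).
    - by rewrite mulVr.
    - by move=> n /andP [_ ltn]; rewrite ef.
    by rewrite add0n /f' binn /= mul1r.
  rewrite (nabn_local (h := f)); first by apply: hi; rewrite i0.
  by move=> n /andP [_ le]; rewrite ef //; apply: leq_trans le _; rewrite -ltnS.
split; first by move=> j; rewrite /w'; case: eqP => [->|] //.
move=> n; rewrite e /= /w' eqxx (prodw_ext (w' := w')); last first.
  by move=> i le; rewrite /w'; case: eqP => // eqi; move: le; rewrite eqi ltnn.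
by rewrite /f' -pw_inv; gsimpl.
Qed.

Lemma taylor D s : (forall x, F D x -> x = one) -> polyA s -> s 0 = one ->
  exists w, (forall j, F j (w j)) /\ forall n, s n = prodw w D.-1 n.
Proof.
move=> hD hs s0; have [f [w [hf [f0 [hi [hw e]]]]]] := peel hs s0 D.-1.
exists w; split=> // n; rewrite e (newton hD hf) ?mul1 // => i ltiD.
case: i ltiD => [|i] lt //; apply: hi; rewrite /=; lia.
Qed.

End Poly.

Section App.
Variable N : T -> Prop.
Hypothesis hN : nrm N.
Definition FN l x := N x /\ gam l x.
Lemma FN_nrm t : nrm (FN t). Proof. exact: nrmI hN (gam_nrm t). Qed.
Lemma FN_S t x : FN t.+1 x -> FN t x. Proof. by case=> ? ?; split=> //; apply: gam_S. Qed.
Lemma FN_c t s x y : FN t x -> FN s y -> FN (t + s) (cm x y).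
Proof.
move=> [hx gx] [hy gy]; split; first exact: nrm_cml hN _ _ hx.
by apply: gam_S; apply: three_sub.
Qed.

Lemma orbit_poly g r : forall t v, FN t v -> polyR FN r t (fun n => cj v (pw g n)).
Proof.
elim: r => [|r IH] t v hv; split=> //; try (by move=> n; apply: nrmJ (FN_nrm t) _ _ hv).
apply: polyR_ext (IH t.+1 (cm v g) _) => [n|]; first by rewrite /nab /= /cj /cm; gsimpl.
by case: hv => ? ?; split; [apply: nrm_cml hN _ _ _ | apply: gam_cm].
Qed.

Lemma core_expand c y g : (forall x, gam c x -> x = one) -> N y ->
  exists w, (forall j, N (w j)) /\ forall n, cm y (pw g n) = prodw w c.-1 n.
Proof.
move=> hc hy.
have hs : polyA FN (fun n => cm y (pw g n)).
  case=> [|r]; split=> //; try (by move=> n; split=> //; apply: nrm_cml hN _ _ hy).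
  apply: polyR_ext (orbit_poly g r (t := 1) (v := cm y g) _) => [n|].
    by rewrite /nab /= /cj /cm; gsimpl.
  by split; [apply: nrm_cml hN _ _ hy | apply: gam_cm].
have [w [hw e]] := taylor FN_nrm FN_S FN_c (D := c) (fun x hx => hc x (proj2 hx)) hs (cm_1r y).
by exists w; split=> // j; case: (hw j).
Qed.

Lemma core_pow c q n y g : (forall x, gam c x -> x = one) ->
  (forall j, 0 < j < c -> q %| 'C(n, j)) -> N y ->
  gen (fun z => exists x, N x /\ z = pw x q) (cm y (pw g n)).
Proof.
move=> hc hq hy; have [w [hw ->]] := core_expand g hc hy.
have : c.-1 <= c.-1 by [].
elim: {-2}c.-1 => [|m IH] le /=; first by apply: sg1 (gen_sg _).
apply: sgM (gen_sg _) _ _ _ (IH (ltnW le)).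
have /dvdnP [k ->] : q %| 'C(n, m.+1) by apply: hq; lia.
by rewrite pwM; apply: gen_sub; exists (pw (w m.+1) k); split=> //; apply: pw_sg (nrm_sg hN) _.
Qed.

End App.

End Core.
End GCore.
Import GCore.


Lemma bin_pdvd p a k j : prime p -> a <= k -> 0 < j < p ^ a -> p ^ (k - a).+1 %| 'C(p ^ k, j).
Proof.
move=> pp le /andP [j0 lt].
have p1 : 1 < p by apply: prime_gt1.
have jn : j <= p ^ k by apply: leq_trans (ltnW lt) (leq_pexp2l (ltnW p1) le).
have C0 : 0 < 'C(p ^ k, j) by rewrite bin_gt0.
have n0 : 0 < p ^ k by rewrite expn_gt0 ltnW.
case: j j0 lt jn C0 => // i _ lt jn C0.
have C'0 : 0 < 'C((p ^ k).-1, i) by rewrite bin_gt0 -ltnS prednK.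
have e := mul_bin_diag (p ^ k) i.
have h1 : logn p (i.+1 * 'C(p ^ k, i.+1)) = k + logn p 'C((p ^ k).-1, i).
  by rewrite -e lognM // pfactorK.
rewrite lognM // in h1.
have h2 : logn p i.+1 < a.
  have := pfactor_dvdnn p i.+1 => /(dvdn_leq (ltn0Sn _)) h.
  by rewrite -(ltn_exp2l _ _ p1); apply: leq_ltn_trans h lt.
rewrite pfactor_dvdn //; lia.
Qed.


Section Topo.
Variables (T : topologicalType) (G : group_law T).
Local Notation "x * y" := (gmul G x y).
Local Notation "x ^-1" := (ginv G x).
Local Notation "1" := (gone G).

Lemma gexp_pw x n : gexp G x n = pw (gmul G) (gone G) x n.
Proof. by elim: n => //= n ->. Qed.

Lemma gc_sg S : is_subgroup G (gen_closed G S).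
Proof.
split; first by move=> H [h1 _] _ _.
split=> [x y hx hy|x hx] H hH cH SH.
- by case: (hH) => _ [hM _]; apply: hM; [apply: hx | apply: hy].
- by case: (hH) => _ [_ hI]; apply: hI; apply: hx.
Qed.

Lemma gc_closed S : closed (gen_closed G S).
Proof.
have -> : gen_closed G S = \bigcap_(H in [set H | is_subgroup G H /\ closed H /\ S `<=` H]) H.
  apply/seteqP; split=> x hx.
  - by move=> H [? [? ?]]; apply: hx.
  - by move=> H ? ? ?; apply: hx.
by apply: closed_bigI => H [_ [? _]].
Qed.

Lemma gc_sub S : S `<=` gen_closed G S.
Proof. by move=> x Sx H _ _; apply. Qed.

Lemma gc_min S H : is_subgroup G H -> closed H -> S `<=` H -> gen_closed G S `<=` H.
Proof. by move=> hH cH SH x; apply. Qed.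

Hypothesis tg : topological_group G.

Lemma contM (f g : T -> T) : continuous f -> continuous g -> continuous (fun t => f t * g t).
Proof.
move=> cf cg t.
have := @continuous_comp _ _ _ (fun x => (f x, g x)) (fun xy : T * T => xy.1 * xy.2) t.
apply; first exact: cvg_pair (cf t) (cg t).
exact: tg.1.
Qed.

Lemma contV (f : T -> T) : continuous f -> continuous (fun t => (f t)^-1).
Proof.
move=> cf t; have := @continuous_comp _ _ _ f (ginv G) t; apply; first exact: cf.
exact: tg.2.
Qed.

Lemma cont_id : continuous (fun t : T => t).
Proof. by move=> t; apply: cvg_id. Qed.

Lemma cont_comm x : continuous (fun t => gcomm G x t).
Proof.
rewrite /gcomm; apply: contM; last exact: cont_id.
apply: contM; last exact: cst_continuous.
by apply: contM; [exact: cst_continuous | apply: contV; exact: cont_id].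
Qed.

Lemma cont_conj z : continuous (fun t => z^-1 * t * z).
Proof.
apply: contM; last exact: cst_continuous.
by apply: contM; [exact: cst_continuous | exact: cont_id].
Qed.

Lemma closed_pre (f : T -> T) (D : set T) : continuous f -> closed D -> closed (f @^-1` D).
Proof. by move=> cf cD; apply: preimage_closed => // x _; apply: cf. Qed.


Lemma sgE H : is_subgroup G H -> sg (gmul G) (ginv G) (gone G) H. Proof. by []. Qed.
Lemma nrmE H : is_normal G H -> nrm (gmul G) (ginv G) (gone G) H. Proof. by []. Qed.

Lemma gpow_nrm N q : is_normal G N -> is_normal G (gpow_sub G N q).
Proof.
have gA := gmulA G; have g1 := gmul1 G; have gV := gmulV G.
move=> hN; split; first exact: gc_sg.
move=> x z hx.
pose H := (fun t => z^-1 * t * z) @^-1` gpow_sub G N q.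
have sgP := sgE (gc_sg [set gexp G x q | x in N]).
suff : H x by [].
move: x hx; apply: gc_min.
- split; first by rewrite /H /= -/(cj (gmul G) (ginv G) 1 z) (cj1 gA g1 gV); apply: sg1 sgP.
  split=> [a b ha hb|a ha]; rewrite /H /=.
    rewrite -/(cj (gmul G) (ginv G) (a * b) z) (cj_mul gA g1 gV).
    exact: sgM sgP _ _ ha hb.
  rewrite -/(cj (gmul G) (ginv G) (a^-1) z) (cj_inv gA g1 gV).
  exact: sgV sgP _ ha.
- by apply: closed_pre; [exact: cont_conj | exact: gc_closed].
- move=> _ [y Ny <-]; rewrite /H /= gexp_pw.
  rewrite -/(cj (gmul G) (ginv G) (pw (gmul G) 1 y q) z) (cj_pw gA g1 gV).
  by apply: gc_sub; exists (z^-1 * y * z); [apply: hN.2 | rewrite gexp_pw].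
Qed.


Lemma gam_lcs l x : gam (gmul G) (ginv G) 1 l x -> lcs G l x.
Proof.
elim: l x => [|l IH] x hx //=.
move: x hx; apply: gen_min; first exact: sgE (gc_sg _).
move=> _ [x [t [hx ->]]]; apply: gc_sub; exists x; first exact: IH.
by exists t.
Qed.

Lemma main_part c k p q : nil_class G c ->
  (forall j, 0 < j < c -> q %| 'C(p ^ k, j)) ->
  forall N, is_normal G N -> gcomm_sub G N (gpow_sub G [set: T] (p ^ k)) `<=` gpow_sub G N q.
Proof.
move=> [hc _] hq N hN.
have gA := gmulA G; have g1 := gmul1 G; have gV := gmulV G.
have hc' : forall x, gam (gmul G) (ginv G) 1 c x -> x = 1.
  by move=> x /gam_lcs; rewrite hc.
pose S := [set t | forall x, N x -> gpow_sub G N q (gcomm G x t)].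
have cS : closed S.
  have -> : S = \bigcap_(x in N) ((fun t => gcomm G x t) @^-1` gpow_sub G N q).
    by apply/seteqP; split=> t ht x hx; apply: ht.
  by apply: closed_bigI => x _; apply: closed_pre; [apply: cont_comm | apply: gc_closed].
have sS : is_subgroup G S := @cent_sg _ _ _ _ gA g1 gV _ N (nrmE (gpow_nrm q hN)).
have KS : gpow_sub G [set: T] (p ^ k) `<=` S.
  apply: gc_min => // _ [g _ <-] y hy.
  rewrite gexp_pw.
  apply: (core_pow gA g1 gV (nrmE hN) g hc' hq hy).
  - exact: sgE (gc_sg _).
  - by move=> _ [x [hx ->]]; apply: gc_sub; exists x => //; exact: gexp_pw.
apply: gc_min; [exact: gc_sg | exact: gc_closed |].
by move=> _ [x hx [y hy <-]]; exact: KS hy x hx.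
Qed.

End Topo.

Lemma setT_nrm (T : topologicalType) (G : group_law T) : is_normal G [set: T].
Proof. by split. Qed.

Unset Implicit Arguments.

Theorem lemma3p2 (c k p : nat) (T : topologicalType) (G : group_law T) :
  prime p -> pro_p_group G p -> fin_gen G -> nil_class G c ->
  let K := gpow_sub G [set: T] (p ^ k) in
  (odd p -> (1 <= k)%N -> (c.+1 <= p ^ (k - 1))%N ->
     (forall N : set T, is_normal G N -> closed N ->
        gcomm_sub G N K `<=` gpow_sub G N p) /\ powerful G p K) /\
  (p = 2 -> (2 <= k)%N -> (c.+1 <= 2 ^ (k - 2))%N ->
     (forall N : set T, is_normal G N -> closed N ->
        gcomm_sub G N K `<=` gpow_sub G N 4) /\ powerful G p K).
Proof.
move=> pp [tg _] _ hnil K.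
have Kn : is_normal G K := gpow_nrm tg (p ^ k) (setT_nrm G).
have p1 : 1 < p by apply: prime_gt1.
split.
- move=> op k1 hck.
  have hq : forall j, 0 < j < c -> p %| 'C(p ^ k, j).
    move=> j /andP [j0 jc].
    have := @bin_pdvd p k k j pp (leqnn k); rewrite subnn expn1; apply.
    rewrite j0 /=; apply: leq_trans jc _; apply: leq_trans (ltnW hck) _.
    by rewrite leq_exp2l // leq_subr.
  have main := main_part tg hnil hq.
  split; first by move=> N hN _; apply: main.
  rewrite /powerful; have -> : (p == 2) = false by apply/eqP => e; rewrite e in op.
  by apply: main.
- move=> p2 k2 hck; subst p.
  have hq : forall j, 0 < j < c -> 4 %| 'C(2 ^ k, j).
    move=> j /andP [j0 jc].
    have := @bin_pdvd 2 (k - 1) k j pp (leq_subr 1 k).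
    have -> : (k - (k - 1)).+1 = 2 by lia.
    apply; rewrite j0 /=; apply: leq_trans jc _; apply: leq_trans (ltnW hck) _.
    by rewrite leq_exp2l //; lia.
  have main := main_part tg hnil hq.
  split; first by move=> N hN _; apply: main.
  by rewrite /powerful eqxx; apply: main.
Qed.
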